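(* Every integer $n\ge 2$ is a cutoff.
   Context: For a real number $\alpha\ge 1$, define the integer sequence $(P^\alpha_i)_{i\ge 0}$ by $P^\alpha_0=0$, $P^\alpha_1=1$, and for $k\ge 1$, $P^\alpha_{k+1}=P^\alpha_k+P^\alpha_j$, where $j\ge1$ is the unique index with $\alpha P^\alpha_{j-1}<P^\alpha_k\le \alpha P^\alpha_j$. A cutoff is a real number $\alpha\ge 1$ such that for every real $\beta$ with $1\le\beta<\alpha$, the sequences $(P^\alpha_i)$ and $(P^\beta_i)$ are not identical. *)

(* Defs.v *)
From Stdlib Require Import Reals List Arith.
Import ListNotations.
Open Scope R_scope.

Definition in_window (alpha : R) (a p b : nat) : bool :=
  if Rlt_dec (alpha * INR a) (INR p) then
    (if Rle_dec (INR p) (alpha * INR b) then true else false)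
  else false.

(* Given the list l = [P_0; ...; P_k] (k >= 1), the index j >= 1 with
   alpha * P_{j-1} < P_k <= alpha * P_j.  Such j necessarily lies in 1..k
   when alpha >= 1 (and is unique since the sequence is increasing);
   we search j in 1..k and return the first one (0 if none, which never
   happens for alpha >= 1). *)
Definition P_index (alpha : R) (l : list nat) : nat :=
  let k := pred (length l) in
  let pk := nth k l 0%nat in
  match find (fun j => in_window alpha (nth (pred j) l 0%nat) pk (nth j l 0%nat))
             (seq 1 k) with
  | Some j => j
  | None => 0%nat
  end.

(* P_list alpha k = [P_0; P_1; ...; P_{k+1}] *)
Fixpoint P_list (alpha : R) (k : nat) : list nat :=
  match k with
  | O => [0%nat; 1%nat]
  | S k' =>
      let l := P_list alpha k' in
      let pk := nth (pred (length l)) l 0%nat in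
      l ++ [(pk + nth (P_index alpha l) l 0%nat)%nat]
  end.

Definition P (alpha : R) (i : nat) : nat := nth i (P_list alpha i) 0%nat.

Definition cutoff (alpha : R) : Prop :=
  1 <= alpha /\
  forall beta : R, 1 <= beta < alpha -> ~ (forall i : nat, P alpha i = P beta i).

(* Main.v *)
Require Import Defs.
From Stdlib Require Import Reals Lra Lia List Arith.
Import ListNotations.
Open Scope R_scope.

Lemma P_list_len : forall a k, length (P_list a k) = S (S k).
Proof.
  intros a k; induction k; simpl; auto.
  rewrite length_app, IHk; simpl; lia.
Qed.

Lemma P_S : forall a i, P a (S i) = nth (S i) (P_list a i) 0%nat.
Proof.
  intros a i; unfold P; simpl.
  rewrite app_nth1; auto. rewrite P_list_len; lia.
Qed.

Lemma seq_app1 : forall k, (seq 0 k ++ [k] = seq 0 (S k))%list.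
Proof.
  intros k. rewrite seq_S. reflexivity.
Qed.

Lemma P_index_pre : forall a k,
  P_index a (seq 0 (S (S k))) =
  if in_window a 0 (S k) 1 then 1%nat else
  match find (fun j => in_window a (nth (pred j) (seq 0 (S (S k))) 0%nat) (S k)
                (nth j (seq 0 (S (S k))) 0%nat)) (seq 2 k) with
  | Some j => j | None => 0%nat end.
Proof.
  intros a k. unfold P_index; cbv beta zeta. rewrite length_seq.
  cbn [Init.Nat.pred]. rewrite seq_nth by lia. rewrite Nat.add_0_l.
  change (seq 1 (S k)) with (1%nat :: seq 2 k). cbn [find].
  change (nth (pred 1) (seq 0 (S (S k))) 0%nat) with 0%nat.
  change (nth 1 (seq 0 (S (S k))) 0%nat) with 1%nat.
  destruct (in_window a 0 (S k) 1); reflexivity.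
Qed.

Lemma P_list_init : forall a k, INR k <= a -> P_list a k = seq 0 (S (S k)).
Proof.
  intros a k; induction k; intros H; [reflexivity|cbn [P_list]].
  rewrite IHk by (rewrite S_INR in H; lra).
  rewrite length_seq. cbn [Init.Nat.pred].
  rewrite seq_nth by lia. rewrite Nat.add_0_l.
  rewrite P_index_pre.
  unfold in_window at 1.
  destruct (Rlt_dec (a * INR 0) (INR (S k))) as [_|C].
  2: { exfalso; apply C; rewrite S_INR; simpl; pose proof (pos_INR k); lra. }
  destruct (Rle_dec (INR (S k)) (a * INR 1)) as [_|C].
  2: { exfalso; apply C; replace (a * INR 1) with a by (simpl; ring); exact H. }
  change (nth 1 (seq 0 (S (S k))) 0%nat) with 1%nat.
  rewrite <- (seq_app1 (S (S k))). f_equal. f_equal. lia.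
Qed.

Lemma find_m : forall (b : R) k, 1 <= b -> b < INR k ->
  exists m, (S m <= k)%nat /\ INR m <= b /\ b < INR (S m).
Proof.
  intros b k Hb; induction k; intros H.
  - simpl in H; lra.
  - destruct (Rlt_dec b (INR k)) as [H1|H1].
    + destruct (IHk H1) as [m [A B]]; exists m; split; [lia|auto].
    + exists k; split; [lia|split; [lra|auto]].
Qed.

Theorem mainTheorem10 : forall n : nat, (2 <= n)%nat -> cutoff (INR n).
Proof.
  intros n Hn. split.
  { apply (le_INR 1) ; lia. }
  intros beta [Hb1 Hb2] Heq.
  destruct (find_m beta n Hb1 Hb2) as [m [Hm [Hm1 Hm2]]].
  specialize (Heq (S (S m))).
  rewrite !P_S in Heq.
  rewrite (P_list_init (INR n) (S m)) in Heq by (apply le_INR; lia).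
  rewrite seq_nth in Heq by lia. rewrite Nat.add_0_l in Heq.
  cbn [P_list] in Heq.
  rewrite (P_list_init beta m Hm1) in Heq.
  rewrite app_nth2 in Heq by (rewrite length_seq; lia).
  rewrite length_seq, Nat.sub_diag in Heq. cbn [nth] in Heq.
  rewrite seq_nth in Heq by lia. rewrite Nat.add_0_l in Heq.
  rewrite P_index_pre in Heq.
  destruct (in_window beta 0 (S m) 1) eqn:W.
  { unfold in_window in W. destruct (Rlt_dec _ _); [|discriminate].
    destruct (Rle_dec _ _) as [r2|]; [|discriminate].
    replace (beta * INR 1) with beta in r2 by (simpl; ring). lra. }
  destruct (find _ (seq 2 m)) as [j|] eqn:F.
  - apply find_some in F as [Fin Fp].
    apply in_seq in Fin.
    rewrite seq_nth in Heq by lia. lia.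
  - change (nth 0 (seq 0 (S (S m))) 0%nat) with 0%nat in Heq. lia.
Qed.
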